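(* For a (Hausdorff) space $X$ the following are equivalent: (i) For every topological vector space $E$, each convex-valued totally-l.s.c. mapping $\Phi:X\rightrightarrows E$ has a continuous selection. (ii) For every set $\mathcal{A}$, each convex-valued totally-l.s.c. mapping $\Phi:X\rightrightarrows\mathbf{c}_{00}(\mathcal{A})$ has a continuous selection (continuity with respect to the norm $\|\cdot\|_1$). (iii) Each open cover of $X$ has an index-subordinated partition of unity. (iv) For every vector space $E$, each convex-valued totally-l.s.c. mapping $\Phi:X\rightrightarrows E$ has a selection which is continuous with respect to the finite topology on $E$.
   Context: A set-valued mapping $\Phi:X\rightrightarrows Y$ assigns to each $x\in X$ a nonempty $\Phi(x)\subseteq Y$; it is convex-valued if each $\Phi(x)$ is convex, and totally-l.s.c. if $\{x:\Phi(x)\cap U\ne\emptyset\}$ is open for every subset $U\subseteq Y$ (no topology on $Y$ is used). A selection is a map $f$ with $f(x)\in\Phi(x)$ for all $x$. $\mathbf{c}_{00}(\mathcal{A})$ is the space of finitely supported functions $\mathcal{A}\to\mathbb{R}$ with $\|y\|_1=\sum|y(\alpha)|$. The finite topology on a vector space $E$: $U$ is open iff $U\cap L$ is open in $L$ for each finite-dimensional linear subspace $L$ (Euclidean topology). An open cover of $X$ indexed by a set $\mathcal{A}$ is a family $\{U_\alpha\}_{\alpha\in\mathcal{A}}$ of open sets with union $X$. A partition of unity indexed by $\mathcal{A}$ is a family of continuous $\xi_\alpha:X\to[0,1]$ with $\sum_\alpha\xi_\alpha(x)=1$ for each $x$ (only countably many nonzero at each $x$, series converging to $1$); it is index-subordinated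 to $\{U_\alpha\}$ if $\{x:\xi_\alpha(x)\ne0\}\subseteq U_\alpha$ for every $\alpha$. *)

(* Defs.v *)
From HB Require Import structures.
From mathcomp Require Import all_boot all_order all_algebra.
From mathcomp Require Import all_classical all_reals all_analysis.
Set Implicit Arguments. Unset Strict Implicit. Unset Printing Implicit Defensive.
Import Order.TTheory GRing.Theory Num.Theory.
Import numFieldNormedType.Exports.
Local Open Scope classical_set_scope.
Local Open Scope ring_scope.

Definition setvalued (X Y : Type) (Phi : X -> set Y) : Prop :=
  forall x, Phi x !=set0.

Definition convex_valued (R : realType) (X : Type) (E : lmodType R)
  (Phi : X -> set E) : Prop :=
  forall x, convex_set (Phi x : set (convex_lmodType E)).

Definition totally_lsc (X : topologicalType) (Y : Type) (Phi : X -> set Y) : Prop :=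
  forall U : set Y, open [set x | Phi x `&` U !=set0].

Definition selection (X Y : Type) (Phi : X -> set Y) (f : X -> Y) : Prop :=
  forall x, Phi x (f x).

Definition c00 (R : realType) (A : choiceType) : set (A -> R) :=
  [set y | finite_set [set a | y a != 0]].

Definition l1dist (R : realType) (A : choiceType) (y z : A -> R) : R :=
  \sum_(a \in [set: A]) `|y a - z a|.

Definition l1_continuous (R : realType) (X : topologicalType) (A : choiceType)
  (f : X -> A -> R) : Prop :=
  forall x (e : R), 0 < e -> \forall y \near x, l1dist (f y) (f x) < e.

Definition lin_indep (R : realType) (E : lmodType R) (n : nat) (v : 'I_n -> E) : Prop :=
  forall c : 'rV[R]_n, \sum_(i < n) c 0 i *: v i = 0 -> c = 0.

(* Finite topology on a vector space E: U is open iff U ∩ L is open in L for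
   each finite-dimensional linear subspace L, L carrying its Euclidean topology.
   A finite-dimensional L is given by a basis v_0..v_{n-1}; its Euclidean
   topology is transported from R^n = 'rV[R]_n along the coordinate map
   c |-> sum_i c_i v_i, so "U ∩ L open in L" reads: the set of coordinate
   vectors c with sum_i c_i v_i ∈ U is open in R^n. *)
Definition finite_open (R : realType) (E : lmodType R) (U : set E) : Prop :=
  forall (n : nat) (v : 'I_n -> E), lin_indep v ->
    open [set c : 'rV[R]_n | U (\sum_(i < n) c 0 i *: v i)].

Definition finite_top_continuous (R : realType) (X : topologicalType)
  (E : lmodType R) (f : X -> E) : Prop :=
  forall U : set E, finite_open U -> open (f @^-1` U).

Definition open_cover (X : topologicalType) (A : Type) (U : A -> set X) : Prop :=
  (forall a, open (U a)) /\ \bigcup_(a in [set: A]) U a = [set: X].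

Definition index_subordinated_pou (R : realType) (X : topologicalType)
  (A : choiceType) (U : A -> set X) (xi : A -> X -> R) : Prop :=
  [/\ (forall a, continuous (xi a)),
      (forall a x, 0 <= xi a x <= 1),
      (forall x, countable [set a | xi a x != 0]),
      (forall x, (\esum_(a in [set: A]) (xi a x)%:E = 1)%E) &
      (forall a, [set x | xi a x != 0] `<=` U a)].

(* Main.v *)
Require Import Defs.
From HB Require Import structures.
From mathcomp Require Import all_boot all_order all_algebra finmap.
From mathcomp Require Import all_classical all_reals all_analysis.
From mathcomp.algebra_tactics Require Import ring lra.
Import Order.TTheory GRing.Theory Num.Theory.
Import numFieldNormedType.Exports.
Local Open Scope classical_set_scope.
Local Open Scope ring_scope.

Lemma near_all_seq {T : Type} {I : eqType} (F : set_system T) {FF : Filter F}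
  (s : seq I) (P : I -> T -> Prop) :
  (forall i, i \in s -> \forall x \near F, P i x) ->
  \forall x \near F, forall i, i \in s -> P i x.
Proof.
elim: s => [|a s IH] H; first by apply: nearW => x i.
have Ha := H a (mem_head a s).
have Hs := IH (fun i hi => H i (mem_behead (s:=a :: s) hi)).
apply: filterS (filterI Ha Hs) => x [Pa Ps] i; rewrite in_cons => /orP[/eqP->//|].
exact: Ps.
Qed.

Section CvgSum.
Variable (R : realType).
Lemma cvg_sum_seq {T : Type} (F : set_system T) {FF : Filter F} (I : Type)
  (s : seq I) (h : I -> T -> R) (l : I -> R) :
  (forall i, h i x @[x --> F] --> l i) ->
  (fun x => \sum_(i <- s) h i x) x @[x --> F] --> \sum_(i <- s) l i.
Proof.
move=> H; elim: s => [|a s IH].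
  rewrite big_nil; under eq_fun do rewrite big_nil; exact: cvg_cst.
rewrite big_cons; under eq_fun do rewrite big_cons.
exact: cvgD.
Qed.
End CvgSum.


Section PouCore.
Variables (R : realType) (X : topologicalType) (A : choiceType) (xi : A -> X -> R).
Hypothesis xi_cont : forall a, continuous (xi a).
Hypothesis xi01 : forall a x, 0 <= xi a x <= 1.
Hypothesis xi_sum : forall x, (\esum_(a in [set: A]) (xi a x)%:E = 1)%E.

Lemma pou_partial (x : X) (e : R) : 0 < e -> exists F : {fset A}, 1 - e < \sum_(a <- F) xi a x.
Proof.
move=> e0.
have : ((1 - e)%:E < \esum_(a in [set: A]) (xi a x)%:E)%E.
  by rewrite xi_sum lte_fin ltrBlDr ltrDl.
move=> /ereal_sup_gt [_ [S [finS _] <-]].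
rewrite fsumEFin // lte_fin => H.
exists (fset_set S); by rewrite -fsbig_finite.
Qed.

Lemma pou_le1 (F : {fset A}) x : \sum_(a <- F) xi a x <= 1.
Proof.
have : ((\sum_(a \in [set` F]) (xi a x)%:E) <= \esum_(a in [set: A]) (xi a x)%:E)%E.
  apply: ereal_sup_ubound; exists [set` F] => //; split => //.
  idtac.
rewrite xi_sum fsumEFin ?lee_fin; last exact: finite_fset.
by rewrite fsbig_finite ?set_fsetK //; exact: finite_fset.
Qed.

Lemma pou_tail (x : X) (e : R) : 0 < e ->
  exists F : {fset A}, \forall z \near x, forall a, a \notin F -> xi a z < e.
Proof.
move=> e0; have [F HF] := @pou_partial x e e0; exists F.
have Hc : (fun z => \sum_(a <- F) xi a z) z @[z --> x] --> \sum_(a <- F) xi a x.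
  by apply: cvg_sum_seq => a; exact: xi_cont.
apply: filterS (cvgr_gt _ Hc _ HF) => z Hz a aF.
have := pou_le1 (a |` F)%fset z.
rewrite big_fsetU1 //= => H.
by rewrite -(ltrD2r (\sum_(a <- F) xi a z)) (le_lt_trans H) // -ltrBlDl.
Qed.


Lemma xi_ex (x : X) : exists a, 0 < xi a x.
Proof.
apply: contrapT => H.
have : (\esum_(a in [set: A]) (xi a x)%:E = 0)%E.
  apply: esum1 => a _.
  have -> : xi a x = 0; last by [].
  have /andP[h0 _] := xi01 a x; apply/eqP; rewrite eq_le h0 andbT.
  by rewrite leNgt; apply/negP => h; apply: H; exists a.
by rewrite xi_sum => /eqP; rewrite eqe oner_eq0.
Qed.

Definition mx (x : X) : R := sup (range (fun a => xi a x)).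

Lemma mx_has_sup x : has_sup (range (fun a => xi a x)).
Proof.
split; first by have [a _] := xi_ex x; exists (xi a x), a.
exists 1 => _ [a _ <-]; by have /andP[_ ?] := xi01 a x.
Qed.

Lemma xi_le_mx a x : xi a x <= mx x.
Proof. by apply: sup_upper_bound (mx_has_sup x) _ _; exists a. Qed.

Lemma mx_gt0 x : 0 < mx x.
Proof. have [a Ha] := xi_ex x; exact: lt_le_trans Ha (xi_le_mx a x). Qed.

Lemma mx_cont : continuous mx.
Proof.
move=> x; apply/cvgrPdist_lt => eps eps0.
have [a _ Ha] : exists2 a, True & mx x - eps < xi a x.
  have := @sup_gt _ (range (fun a => xi a x)) (mx x - eps) (mx_has_sup x).1.
  rewrite ltrBlDr ltrDl => /(_ eps0) [_ [a _ <-]] H; by exists a.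
have Hxa : xi a z @[z --> x] --> xi a x := xi_cont a x.
have Hlow : \forall z \near x, mx x - eps < xi a z := @cvgr_gt _ _ _ (nbhs_filter x) _ _ Hxa _ Ha.
have e20 : 0 < eps / 2 by rewrite divr_gt0.
have [F HF] := pou_tail x (eps / 2) e20.
have HFa : \forall z \near x, forall b, b \in F -> xi b z < xi b x + eps / 2.
  apply: (@near_all_seq _ _ (nbhs x) _) => b _; apply: cvgr_lt; first exact: xi_cont.
  by rewrite ltrDl.
apply: (@filterS _ (nbhs x) _ _ _ _ (filterI Hlow (filterI HF HFa))) => z [Hl [Ht Hin]].
rewrite ltr_distlC; apply/andP; split.
  exact: lt_le_trans Hl (xi_le_mx a z).
apply: (@le_lt_trans _ _ (mx x + eps / 2)); last first.
  by rewrite ltrD2l ltr_pdivrMr // ltr_pMr // ltr1n.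
apply: ge_sup; first by have [b _] := xi_ex z; exists (xi b z), b.
move=> _ [b _ <-]; case: (boolP (b \in F)) => bF.
  by apply/ltW; apply: lt_le_trans (Hin b bF) _; rewrite lerD2r xi_le_mx.
apply/ltW; apply: lt_le_trans (Ht b bF) _.
by rewrite lerDr; apply/ltW/mx_gt0.
Qed.


Definition etaf a z := Num.max 0 (xi a z - mx z / 2).

Lemma eta_ge0 a z : 0 <= etaf a z.
Proof. by rewrite /etaf le_max lexx. Qed.

Lemma eta_pos a z : 0 < etaf a z -> mx z / 2 < xi a z.
Proof.
rewrite /etaf lt_max ltxx /= => H.
by rewrite -subr_gt0.
Qed.

Lemma eta_xi a z : etaf a z != 0 -> xi a z != 0.
Proof.
move=> H; have : 0 < etaf a z by rewrite lt_neqAle eq_sym H eta_ge0.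
move=> /eta_pos H2; apply/negP => /eqP H3; move: H2; rewrite H3.
by rewrite ltNge ltW // divr_gt0 // mx_gt0.
Qed.

Lemma eta_cont a : continuous (etaf a).
Proof.
move=> x; rewrite /etaf.
have H1 : (fun z => xi a z - mx z / 2) z @[z --> x] --> xi a x - mx x / 2.
  apply: cvgB; first exact: xi_cont.
  apply: cvgM; first exact: mx_cont.
  exact: cvg_cst.
exact: (@continuous_max R X (fun _ => 0) (fun z => xi a z - mx z / 2) x (cvg_cst _) H1).
Qed.

Lemma eta_ex z : exists a, 0 < etaf a z.
Proof.
have : mx z / 2 < sup (range (fun a => xi a z)).
  by rewrite -/(mx z) ltr_pdivrMr // ltr_pMr ?ltr1n // mx_gt0.
move=> /(sup_gt (mx_has_sup z).1) [_ [a _ <-]] H.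
by exists a; rewrite /etaf lt_max subr_gt0 H orbT.
Qed.

Lemma eta_lf (x : X) : exists F : {fset A},
  \forall z \near x, forall a, a \notin F -> etaf a z = 0.
Proof.
have m40 : 0 < mx x / 4 by rewrite divr_gt0 // mx_gt0.
have [F HF] := pou_tail x (mx x / 4) m40.
exists F.
have Hm : mx z @[z --> x] --> mx x := mx_cont x.
have Hm2 : \forall z \near x, mx x / 2 < mx z.
  apply: (@cvgr_gt _ _ _ (nbhs_filter x) _ _ Hm).
  by rewrite ltr_pdivrMr // ltr_pMr ?ltr1n // mx_gt0.
apply: (@filterS _ (nbhs x) _ _ _ _ (filterI HF Hm2)) => z [Ht Hz] a aF.
apply/eqP; rewrite /etaf eq_le le_max lexx /= ge_max lexx /=.
rewrite subr_le0 andbT; apply/ltW; apply: lt_trans (Ht a aF) _.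
rewrite -(@ltr_pM2r _ 2) // divfK ?pnatr_eq0 //.
apply: le_lt_trans _ (_ : mx x / 2 < mx z); last exact: Hz.
have := mx_gt0 x; lra.
Qed.

End PouCore.
Arguments mx {R X A}.
Arguments etaf {R X A}.


Lemma convex_comb (R : realType) (E : lmodType R) (C : set E)
  (hC : convex_set (C : set (convex_lmodType E))) (I : eqType) (s : seq I)
  (w : I -> R) (p : I -> E) :
  (forall i, 0 <= w i) -> \sum_(i <- s) w i = 1 ->
  (forall i, w i != 0 -> C (p i)) -> C (\sum_(i <- s) w i *: p i).
Proof.
move=> w0; elim: s w w0 => [|a s IH] w w0; first by rewrite big_nil => /eqP; rewrite eq_sym oner_eq0.
rewrite !big_cons => Hs HC.
set t := \sum_(i <- s) w i.
have t0 : 0 <= t by apply: sumr_ge0.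
have [/eqP tz|tnz] := boolP (t == 0).
  have : \sum_(i <- s) w i == 0 by rewrite -/t tz.
  rewrite psumr_eq0 // => /allP Hall.
  rewrite big1_seq; last by move=> i [] /Hall /eqP ->; rewrite scale0r.
  move: Hs; rewrite -/t tz addr0 => wa1.
  by rewrite addr0 wa1 scale1r; apply: HC; rewrite wa1 oner_eq0.
have tp : 0 < t by rewrite lt_neqAle eq_sym tnz t0.
have [/eqP wa0|wanz] := boolP (w a == 0).
  rewrite wa0 scale0r add0r; apply: IH => //.
  by move: Hs; rewrite wa0 add0r.
pose w' i := w i / t.
have Hq : C (\sum_(i <- s) w' i *: p i).
  apply: IH.
  - by move=> i; rewrite /w' divr_ge0.
  - by rewrite /w' -mulr_suml -/t divff.
  - move=> i; rewrite /w' mulf_eq0 negb_or => /andP[wi _]; exact: HC.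
have -> : \sum_(i <- s) w i *: p i = t *: \sum_(i <- s) w' i *: p i.
  rewrite scaler_sumr; apply: eq_bigr => i _; rewrite scalerA /w'.
  by rewrite mulrC -mulrA mulVf ?mulr1.
have wa_ge0 := w0 a.
have wa_le1 : w a <= 1 by rewrite -Hs lerDl.
have := hC (p a) (\sum_(i <- s) w' i *: p i) (Itv01 wa_ge0 wa_le1).
rewrite !inE => /(_ (HC a wanz) Hq).
congr C => /=.
congr (_ + _); congr (_ *: _); rewrite /unstable.onem /= -Hs -/t; ring.
Qed.

Section Sel.
Variables (R : realType) (X : topologicalType) (A : choiceType) (xi : A -> X -> R).
Hypothesis xi_cont : forall a, continuous (xi a).
Hypothesis xi01 : forall a x, 0 <= xi a x <= 1.
Hypothesis xi_sum : forall x, (\esum_(a in [set: A]) (xi a x)%:E = 1)%E.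
Variables (E : lmodType R) (v : A -> E) (Phi : X -> set E).
Hypothesis convPhi : convex_valued Phi.
Hypothesis sub : forall a z, xi a z != 0 -> Phi z (v a).

Local Notation et := (etaf xi).
Let eta_ex' := @eta_ex R X A xi xi01 xi_sum.
Let eta_lf' := @eta_lf R X A xi xi_cont xi01 xi_sum.
Let eta_xi' := @eta_xi R X A xi xi01 xi_sum.
Let eta_cont' := @eta_cont R X A xi xi_cont xi01 xi_sum.
Let eta_ge0' := @eta_ge0 R X A xi.

Definition Ssum z := \sum_(a \in [set: A]) et a z.
Definition fsel z := (Ssum z)^-1 *: \sum_(a \in [set: A]) et a z *: v a.

Lemma fsel_loc (z : X) (F : {fset A}) : (forall a, a \notin F -> et a z = 0) ->
  fsel z = \sum_(a <- F) (et a z / \sum_(b <- F) et b z) *: v a.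
Proof.
move=> HF; rewrite /fsel /Ssum (fsbigTE F) // (fsbigTE F); last first.
  by move=> i /HF ->; rewrite scale0r.
rewrite scaler_sumr; apply: eq_bigr => a _; by rewrite scalerA mulrC.
Qed.

Lemma sumF_gt0 (z : X) (F : {fset A}) : (forall a, a \notin F -> et a z = 0) ->
  0 < \sum_(b <- F) et b z.
Proof.
move=> HF; have [a Ha] := eta_ex' z.
have aF : a \in F by apply: contraT => /HF H; move: Ha; rewrite H ltxx.
rewrite (bigD1_seq a) //=.
apply: lt_le_trans (_ : et a z <= _) => //.
by rewrite lerDl sumr_ge0 // => i _; apply: eta_ge0'.
Qed.

Lemma fsel_sel : selection Phi fsel.
Proof.
move=> z; have [F HF] := eta_lf' z.
have HFz := nbhs_singleton HF.
rewrite (@fsel_loc z F HFz).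
have Sp := @sumF_gt0 z F HFz.
apply: convex_comb => //. all: try exact: convPhi.
- by move=> a; rewrite divr_ge0 ?eta_ge0' // ltW.
- by rewrite -mulr_suml divff // gt_eqF.
- move=> a; rewrite mulf_eq0 negb_or => /andP[H _]; apply: sub.
  exact: eta_xi' H.
Qed.

Lemma fsel_rep (x : X) : exists (F : {fset A}) (c : A -> X -> R),
  [/\ (forall a, c a z @[z --> x] --> c a x),
      (forall a z, c a z != 0 -> Phi z (v a)) &
      \forall z \near x, fsel z = \sum_(a <- F) c a z *: v a].
Proof.
have [F HF] := eta_lf' x.
exists F, (fun a z => et a z / \sum_(b <- F) et b z); split.
- move=> a; apply: cvgM; first exact: eta_cont'.
  apply: cvgV; first by rewrite gt_eqF // (@sumF_gt0 x F (nbhs_singleton HF)).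
  by apply: cvg_sum_seq => b; apply: eta_cont'.
- move=> a z; rewrite mulf_eq0 negb_or => /andP[H _]; apply: sub.
  exact: eta_xi' H.
- by apply: (@filterS _ (nbhs x) _ _ _ _ HF) => z Hz; rewrite (@fsel_loc z F Hz).
Qed.

End Sel.


Definition prop_iii (R : realType) (X : topologicalType) :=
  forall (A : choiceType) (U : A -> set X), open_cover U ->
        exists xi : A -> X -> R, index_subordinated_pou U xi.

Lemma from_iii (R : realType) (X : topologicalType) (H3 : prop_iii R X)
  (E : lmodType R) (Phi : X -> set E) :
  setvalued Phi -> convex_valued Phi -> totally_lsc Phi ->
  exists f : X -> E, selection Phi f /\ forall x, exists (F : {fset E}) (c : E -> X -> R),
  [/\ (forall a, c a z @[z --> x] --> c a x),
      (forall a z, c a z != 0 -> Phi z a) &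
      \forall z \near x, f z = \sum_(a <- F) c a z *: a].
Proof.
move=> sv cv tl.
have oc : open_cover (fun a : E => [set z | Phi z a]).
  split.
    move=> a; have := tl [set a]; congr open; apply/seteqP; split => z /=.
      by move=> [b [Pb <-]].
    by move=> Pa; exists a.
  apply/seteqP; split => // z _; have [a Pa] := sv z; by exists a.
have [xi [xc x01 _ xs xsub]] := H3 _ _ oc.
have sub : forall a z, xi a z != 0 -> Phi z a by move=> a z H; exact: xsub.
exists (@fsel R X _ xi E id); split.
  exact: (@fsel_sel R X _ xi xc x01 xs E id Phi cv sub).
move=> x; exact: (@fsel_rep R X _ xi xc x01 xs E id Phi sub x).
Qed.

Lemma tvs_sum_cvgI (R : realType) (E : topologicalLmodType R) (T : Type)
  (F : set_system T) {FF : Filter F} (I : Type) (p : I -> E) (s : seq I) (c : I -> T -> R) (l : I -> R) :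
  (forall a, c a z @[z --> F] --> l a) ->
  (fun z => \sum_(a <- s) c a z *: p a) z @[z --> F] --> \sum_(a <- s) l a *: p a.
Proof.
move=> Hc; elim: s => [|a s IH].
  rewrite big_nil; under eq_fun do rewrite big_nil; exact: cvg_cst.
rewrite big_cons; under eq_fun do rewrite big_cons.
have Ha : (fun z => c a z *: p a) z @[z --> F] --> l a *: p a.
  have Hp : (c a z, p a) @[z --> F] --> ((l a : R^o), p a).
    exact: (cvg_pair (Hc a) (cvg_cst (p a))).
  exact: (cvg_comp _ _ Hp (@scale_continuous R E (l a, p a))).
have Hp : (c a z *: p a, \sum_(a <- s) c a z *: p a) @[z --> F] -->
   (l a *: p a, \sum_(a <- s) l a *: p a) by apply: cvg_pair.
exact: (cvg_comp _ _ Hp (@add_continuous E (_, _))).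
Qed.

Lemma tvs_sum_cvg (R : realType) (E : topologicalLmodType R) (T : Type)
  (F : set_system T) {FF : Filter F} (s : seq E) (c : E -> T -> R) (l : E -> R) :
  (forall a, c a z @[z --> F] --> l a) ->
  (fun z => \sum_(a <- s) c a z *: a) z @[z --> F] --> \sum_(a <- s) l a *: a.
Proof. exact: (@tvs_sum_cvgI R E T F FF E id s c l). Qed.

Lemma iii_i (R : realType) (X : topologicalType) : prop_iii R X ->
  forall (E : topologicalLmodType R) (Phi : X -> set E),
        setvalued Phi -> convex_valued Phi -> totally_lsc Phi ->
        exists f : X -> E, selection Phi f /\ continuous f.
Proof.
move=> H3 E Phi sv cv tl.
have [f [fs frep]] := @from_iii R X H3 E Phi sv cv tl.
exists f; split => // x.
have [F [c [Hc _ Hn]]] := frep x.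
have Hg := @tvs_sum_cvg R E X (nbhs x) (nbhs_filter x) F c (fun a => c a x) Hc.
have fx : f x = \sum_(a <- F) c a x *: a := nbhs_singleton Hn.
rewrite /continuous_at fx.
have Hn' : \forall z \near x, (fun z => \sum_(a <- F) c a z *: a) z = f z.
  by apply: (@filterS _ (nbhs x) _ _ _ _ Hn) => z ->.
have K := (@near_eq_cvg X E (nbhs x) (nbhs_filter x) _ _ Hn').
exact: (cvg_trans K Hg).
Qed.

Lemma open_finite_open (R : realType) (E : topologicalLmodType R) (U : set E) :
  open U -> finite_open U.
Proof.
move=> oU n v _.
have Hc : continuous (fun c : 'rV[R]_n => \sum_(i < n) c 0 i *: v i).
  move=> c0.
  apply: (@tvs_sum_cvgI R E _ (nbhs c0) (nbhs_filter c0) 'I_n v (index_enum 'I_n)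
     (fun i c => c 0 i) (fun i => c0 0 i)).
  move=> i; exact: coord_continuous.
exact: (proj1 (continuousP _) Hc U oU).
Qed.

Lemma iv_i (R : realType) (X : topologicalType) :
  (forall (E : lmodType R) (Phi : X -> set E),
        setvalued Phi -> convex_valued Phi -> totally_lsc Phi ->
        exists f : X -> E, selection Phi f /\ finite_top_continuous f) ->
  forall (E : topologicalLmodType R) (Phi : X -> set E),
        setvalued Phi -> convex_valued Phi -> totally_lsc Phi ->
        exists f : X -> E, selection Phi f /\ continuous f.
Proof.
move=> H4 E Phi sv cv tl.
have [f [fs fc]] := H4 E Phi sv cv tl.
exists f; split => //; apply/continuousP => U oU.
apply: fc; exact: open_finite_open.
Qed.


Lemma rV_cvg (R : realType) (T : Type) (F : set_system T) {FF : Filter F} (m : nat)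
  (g : T -> 'rV[R]_m) (l : 'rV[R]_m) :
  (forall k, (fun z => g z 0 k) z @[z --> F] --> l 0 k) -> g z @[z --> F] --> l.
Proof.
move=> Hk s /(nbhs_ballP l) [e e0 es].
have H : \forall z \near F, forall k, ball (l 0 k) e (g z 0 k).
  apply: filter_forall => k.
  exact: (Hk k _ (nbhsx_ballx (l 0 k) e e0)).
apply: filterS H => z Hz; apply: es.
split => // i j; rewrite (ord1 i); exact: Hz.
Qed.

Lemma fin_open_gen (R : realType) (E : lmodType R) (U : set E) :
  finite_open U -> forall n (v : 'I_n -> E),
  open [set c : 'rV[R]_n | U (\sum_(i < n) c 0 i *: v i)].
Proof.
move=> HU; elim=> [|m IH] v.
  by apply: HU => c _; apply: thinmx0.
have [Hi|Hni] := pselect (lin_indep v); first exact: HU.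
have [c0 [Hc0 nz]] : exists c0 : 'rV[R]_m.+1, \sum_(i < m.+1) c0 0 i *: v i = 0 /\ c0 != 0.
  apply: contrapT => H; apply: Hni => c Hc; apply: contrapT => /eqP ne.
  by apply: H; exists c.
have [j cj] : exists j, c0 0 j != 0.
  apply: contrapT => H; move: nz; apply/negP; rewrite negbK; apply/eqP/rowP => j.
  rewrite mxE; apply: contrapT => /eqP ne; apply: H; by exists j.
pose d k := - (c0 0 (lift j k) / c0 0 j).
have vj : v j = \sum_(k < m) d k *: v (lift j k).
  move: Hc0; rewrite (bigD1_ord j) //= => /eqP; rewrite addr_eq0 => /eqP H.
  have -> : v j = (c0 0 j)^-1 *: (c0 0 j *: v j) by rewrite scalerA mulVf // scale1r.
  rewrite H scalerN scaler_sumr -sumrN; apply: eq_bigr => k _.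
  by rewrite scalerA /d -scaleNr mulrC.
pose pi (c : 'rV[R]_m.+1) : 'rV[R]_m := \row_k (c 0 (lift j k) + c 0 j * d k).
have Heq : forall c : 'rV[R]_m.+1, \sum_(i < m.+1) c 0 i *: v i =
    \sum_(k < m) pi c 0 k *: v (lift j k).
  move=> c; rewrite (bigD1_ord j) //= vj scaler_sumr -big_split /=.
  apply: eq_bigr => k _; rewrite mxE scalerA scalerDl addrC.
  done.
have Hpi : continuous pi.
  move=> c; apply: (@rV_cvg R _ (nbhs c) (nbhs_filter c)) => k.
  under eq_fun do rewrite mxE.
  rewrite mxE; apply: cvgD; first exact: coord_continuous.
  apply: cvgM; first exact: coord_continuous.
  exact: cvg_cst.
have -> : [set c : 'rV[R]_m.+1 | U (\sum_(i < m.+1) c 0 i *: v i)] =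
    pi @^-1` [set c' : 'rV[R]_m | U (\sum_(k < m) c' 0 k *: v (lift j k))].
  by apply/seteqP; split => c /=; rewrite Heq.
exact: (proj1 (continuousP _) Hpi _ (IH _)).
Qed.

Lemma iii_iv (R : realType) (X : topologicalType) : prop_iii R X ->
  forall (E : lmodType R) (Phi : X -> set E),
        setvalued Phi -> convex_valued Phi -> totally_lsc Phi ->
        exists f : X -> E, selection Phi f /\ finite_top_continuous f.
Proof.
move=> H3 E Phi sv cv tl.
have [f [fs frep]] := @from_iii R X H3 E Phi sv cv tl.
exists f; split => // U HU; rewrite openE => x /= Ux.
have [F [c [Hc _ Hn]]] := frep x.
pose s : seq E := F.
pose v (i : 'I_(size s)) := nth 0 s i.
pose g z : 'rV[R]_(size s) := \row_i c (nth 0 s i) z.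
have Heq : forall z, \sum_(a <- F) c a z *: a = \sum_(i < size s) g z 0 i *: v i.
  move=> z; rewrite (big_nth 0) big_mkord; apply: eq_bigr => i _.
  by rewrite mxE.
have HW := @fin_open_gen R E U HU (size s) v.
have Hg : g z @[z --> x] --> g x.
  apply: (@rV_cvg R _ (nbhs x) (nbhs_filter x)) => k.
  under eq_fun do rewrite mxE.
  rewrite mxE; exact: Hc.
have gW : nbhs (g x) [set c : 'rV[R]_(size s) | U (\sum_(i < size s) c 0 i *: v i)].
  apply: open_nbhs_nbhs; split => //=.
  by rewrite -Heq -(nbhs_singleton Hn).
have := Hg _ gW.
move=> H.
have H' : \forall z \near x, U (\sum_(i < size s) g z 0 i *: v i) := H.
apply: (@filterS _ (nbhs x) _ _ _ _ (filterI H' Hn)) => z [Hz Hfz].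
rewrite /= Hfz Heq; exact: Hz.
Qed.


Lemma init_cvg (S : choiceType) (T : topologicalType) (f : S -> T)
  (F : set_system S) {FF : Filter F} (s : S) :
  f @ F --> f s -> F --> (s : initial_topology f).
Proof.
move=> H A /= [_ [[B Bop <-] Bfs sBfA]].
have : nbhs (f s) B by apply: open_nbhs_nbhs.
move=> /H FB; exact: filterS sBfA FB.
Qed.

Module PT.
Import ArrowAsProduct.
Section S.
Variables (A : choiceType) (R : realType).
Definition pfun := A -> R^o.
HB.instance Definition _ := GRing.Lmodule.on pfun.
HB.instance Definition _ := Topological.on pfun.

Lemma pfun_cvg (G : set_system pfun) {FG : Filter G} (f : pfun) :
  (forall a, (fun g : pfun => g a) @ G --> f a) -> G --> f.
Proof.
move=> H; apply/cvg_sup => a; apply: init_cvg; exact: H.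
Qed.

Lemma pfun_proj (a : A) : continuous (fun g : pfun => g a).
Proof. move=> f; exact: (@proj_continuous A (fun _ => R^o) a f). Qed.

Lemma pfun_add : continuous (fun x : pfun * pfun => x.1 + x.2).
Proof.
move=> [f g]; apply: pfun_cvg => a.
have h1 : (fun p : pfun * pfun => p.1 a) @ (f, g) --> f a.
  exact: (cvg_comp _ _ (@cvg_fst _ _ (nbhs f) (nbhs g) (nbhs_filter g)) (pfun_proj a f)).
have h2 : (fun p : pfun * pfun => p.2 a) @ (f, g) --> g a.
  exact: (cvg_comp _ _ (@cvg_snd _ _ (nbhs f) (nbhs g) (nbhs_filter f)) (pfun_proj a g)).
exact: (cvgD h1 h2).
Qed.

HB.instance Definition _ :=
  PreTopologicalNmodule_isTopologicalNmodule.Build pfun pfun_add.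

Lemma pfun_scale : continuous (fun z : R^o * pfun => z.1 *: z.2).
Proof.
move=> [k f]; apply: pfun_cvg => a.
have h1 : (fun p : R^o * pfun => p.1) @ (k, f) --> k.
  exact: (@cvg_fst _ _ (nbhs k) (nbhs f) (nbhs_filter f)).
have h2 : (fun p : R^o * pfun => p.2 a) @ (k, f) --> f a.
  exact: (cvg_comp _ _ (@cvg_snd _ _ (nbhs k) (nbhs f) (nbhs_filter k)) (pfun_proj a f)).
exact: (cvgM h1 h2).
Qed.

HB.instance Definition _ :=
  TopologicalNmodule_isTopologicalLmodule.Build R pfun pfun_scale.

Check (pfun : topologicalLmodType R).
End S.
End PT.


Lemma sumT_fset (R : realType) (A : choiceType) (g : A -> R) (D : set A) :
  finite_set D -> (forall a, ~ D a -> g a = 0) ->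
  \sum_(a \in [set: A]) g a = \sum_(a <- fset_set D) g a.
Proof.
move=> fD H; apply: fsbigTE => a; rewrite in_fset_set // => aD.
apply: H => Da; move: aD; by rewrite mem_set.
Qed.

Lemma le_sumT (R : realType) (A : choiceType) (g : A -> R) (a : A) :
  finite_set [set b | g b != 0] -> (forall b, 0 <= g b) ->
  g a <= \sum_(b \in [set: A]) g b.
Proof.
move=> fg g0.
rewrite (@sumT_fset R A g _ fg); last by move=> b /= /negP; rewrite negbK => /eqP.
have [ga0|ga] := eqVneq (g a) 0.
  by rewrite ga0 sumr_ge0.
rewrite (bigD1_seq a) //=; last by rewrite in_fset_set // inE.
by rewrite lerDl sumr_ge0.
Qed.

Section ConvE.
Local Open Scope convex_scope.
Lemma convE (R : realType) (E : lmodType R) (p : {i01 R}) (x y : convex_lmodType E) :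
  x <| p |> y = p%:num *: x + (1 - p%:num) *: y.
Proof. by []. Qed.
End ConvE.

Section Simplex.
Variables (R : realType) (X : topologicalType) (A : choiceType) (U : A -> set X).

Definition simplex (x : X) : set (A -> R) :=
  [set y | c00 y /\ (forall a, 0 <= y a) /\ \sum_(a \in [set: A]) y a = 1
           /\ (forall a, y a != 0 -> U a x)].

Lemma simplex_c00 x : simplex x `<=` @c00 R A.
Proof. by move=> y []. Qed.

Lemma simplex_sv : open_cover U -> setvalued simplex.
Proof.
move=> [_ hU] x.
have : (\bigcup_(a in [set: A]) U a) x by rewrite hU.
case => a _ Uax.
pose y (b : A) : R := if b == a then 1 else 0.
have ya : forall b, y b != 0 -> b = a.
  by move=> b; rewrite /y; case: ifP => [/eqP -> //|_]; rewrite eqxx.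
exists y; split; [|split; [|split]].
- apply: (@sub_finite_set _ _ [set a]) => // b /= /ya ->; done.
- by move=> b; rewrite /y; case: eqP.
- rewrite (@sumT_fset R A y [set a]) //; last by move=> b ba; apply/eqP; apply: contraT => /ya.
  by rewrite fset_set1 big_seq_fset1 /y eqxx.
- by move=> b /ya ->.
Qed.

Lemma simplex_conv : convex_valued simplex.
Proof.
move=> x y w l; rewrite !inE => -[cy [py [sy uy]]] [cw [pw [sw uw]]].
rewrite convE.
set z := _ + _.
have zE : forall a, z a = l%:num * y a + (1 - l%:num) * w a by [].
have l0 : 0 <= l%:num by [].
have l1 : 0 <= 1 - l%:num by rewrite subr_ge0.
have zsupp : forall a, z a != 0 -> y a != 0 \/ w a != 0.
  move=> a; rewrite zE; apply: contraPP => /not_orP [/negP] /negPn /eqP -> /negP /negPn /eqP ->.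
  by rewrite !mulr0 addr0 eqxx.
have fD : finite_set ([set a | y a != 0] `|` [set a | w a != 0]).
  by rewrite finite_setU.
split; [|split; [|split]].
- apply: sub_finite_set fD => a /zsupp.
  done.
- by move=> a; rewrite zE addr_ge0 // mulr_ge0.
- rewrite (@sumT_fset R A z _ fD); last first.
    move=> a /not_orP [/negP /negPn /eqP ya /negP /negPn /eqP wa].
    by rewrite zE ya wa !mulr0 addr0.
  move: sy sw.
  rewrite (@sumT_fset R A y _ fD); last first.
    by move=> a /not_orP [/negP /negPn /eqP ya _].
  rewrite (@sumT_fset R A w _ fD); last first.
    by move=> a /not_orP [_ /negP /negPn /eqP wa].
  move=> sy sw.
  under eq_bigr do rewrite zE.
  by rewrite big_split /= -!mulr_sumr sy sw !mulr1 addrC subrK.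
- by move=> a /zsupp [/uy|/uw].
Qed.

Lemma simplex_tlsc : (forall a, open (U a)) -> totally_lsc simplex.
Proof.
move=> hU W; rewrite openE => x /= [y [Sy Wy]].
have fS : finite_set [set a | y a != 0] := Sy.1.
have H : \forall z \near x, forall a, a \in fset_set [set a | y a != 0] -> U a z.
  apply: (@near_all_seq _ _ (nbhs x) (nbhs_filter x)) => a.
  rewrite in_fset_set // inE /= => ya.
  apply: open_nbhs_nbhs; split; first exact: hU.
  by apply: Sy.2.2.2.
rewrite /interior; apply: (@filterS _ (nbhs x) _ _ _ _ H) => z Hz.
exists y; split => //; split; first exact: Sy.1.
split; first exact: Sy.2.1.
split; first exact: Sy.2.2.1.
by move=> a ya; apply: Hz; rewrite in_fset_set // inE.
Qed.

Lemma simplex_pou (f : X -> A -> R) : (forall x, simplex x (f x)) ->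
  (forall a, continuous (fun x => f x a)) ->
  index_subordinated_pou U (fun a x => f x a).
Proof.
move=> fs fc; split => //.
- move=> a x; have [c [p [s _]]] := fs x; rewrite p /= -s.
  exact: le_sumT.
- move=> x; apply: finite_set_countable; exact: (fs x).1.
- move=> x; have [c [p [s _]]] := fs x.
  have -> : (\esum_(a in [set: A]) (f x a)%:E = \esum_(a in [set a | f x a != 0%R]) (f x a)%:E)%E.
    rewrite [RHS](esum_mkcond [set a | f x a != 0]); apply: eq_esum => a _.
    case: ifP => // /negbT; rewrite notin_setE /= => /negP; rewrite negbK => /eqP fa0; by rewrite fa0.
  rewrite esum_fset //; last by move=> i _; rewrite lee_fin.
  rewrite fsumEFin // -s (@sumT_fset R A (f x) _ c); last first.
    by move=> a /negP; rewrite negbK => /eqP.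
  by rewrite fsbig_finite.
- by move=> a x /= fa; have [_ [_ [_ u]]] := fs x; exact: u.
Qed.

End Simplex.


Definition prop_ii (R : realType) (X : topologicalType) :=
  forall (A : choiceType) (Phi : X -> set (A -> R)),
        setvalued Phi -> (forall x, Phi x `<=` @c00 R A) ->
        convex_valued Phi -> totally_lsc Phi ->
        exists f : X -> A -> R, selection Phi f /\ l1_continuous f.

Definition prop_i (R : realType) (X : topologicalType) :=
  forall (E : topologicalLmodType R) (Phi : X -> set E),
        setvalued Phi -> convex_valued Phi -> totally_lsc Phi ->
        exists f : X -> E, selection Phi f /\ continuous f.

Lemma coord_le_l1 (R : realType) (A : choiceType) (y w : A -> R) a :
  c00 y -> c00 w -> `|y a - w a| <= l1dist y w.
Proof.
move=> cy cw; rewrite /l1dist.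
apply: (@le_sumT R A (fun b => `|y b - w b|)); last by move=> b.
have : finite_set ([set b | y b != 0] `|` [set b | w b != 0]) by rewrite finite_setU.
apply: sub_finite_set => b /=; rewrite normr_eq0 => H.
apply: contraPP H => /not_orP [/negP /negPn /eqP -> /negP /negPn /eqP ->].
by rewrite subrr eqxx.
Qed.

Lemma ii_iii (R : realType) (X : topologicalType) : prop_ii R X -> prop_iii R X.
Proof.
move=> H2 A U hU.
have [f [fs fc]] := H2 A (@simplex R X A U) (@simplex_sv R X A U hU)
  (@simplex_c00 R X A U) (@simplex_conv R X A U) (@simplex_tlsc R X A U hU.1).
exists (fun a x => f x a); apply: simplex_pou => // a x.
apply/cvgrPdist_lt => e e0.
apply: (@filterS _ (nbhs x) _ _ _ _ (fc x e e0)) => z Hz.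
rewrite distrC; apply: le_lt_trans Hz; apply: coord_le_l1.
- exact: (fs z).1.
- exact: (fs x).1.
Qed.

Import PT.
Lemma i_iii (R : realType) (X : topologicalType) : prop_i R X -> prop_iii R X.
Proof.
move=> H1 A U hU.
have [f [fs fc]] := H1 (PT.pfun A R) (@simplex R X A U) (@simplex_sv R X A U hU)
  (@simplex_conv R X A U) (@simplex_tlsc R X A U hU.1).
exists (fun a x => f x a); apply: simplex_pou => // a.
move=> x; apply: (cvg_comp _ _ (fc x) (@PT.pfun_proj A R a (f x))).
Qed.

Section L1.
Variables (R : realType) (A : choiceType).
Definition l1n (y : A -> R) := \sum_(b \in [set: A]) `|y b|.

Lemma c00_0 : c00 (0 : A -> R).
Proof. apply: (@sub_finite_set _ _ set0) => // b /=; by rewrite eqxx. Qed.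

Lemma c00_add (y w : A -> R) : c00 y -> c00 w -> c00 (y + w).
Proof.
move=> cy cw; have : finite_set ([set b | y b != 0] `|` [set b | w b != 0]) by rewrite finite_setU.
apply: sub_finite_set => b /= H.
apply: contraPP H => /not_orP [/negP /negPn /eqP ya /negP /negPn /eqP wa].
have -> : (y + w) b = y b + w b by [].
by rewrite ya wa addr0 eqxx.
Qed.

Lemma c00_scale (k : R) (y : A -> R) : c00 y -> c00 (k *: y).
Proof.
move=> cy; apply: sub_finite_set cy => b /=.
by rewrite mulf_eq0 negb_or => /andP[].
Qed.

Lemma l1n_add (y w : A -> R) : c00 y -> c00 w -> l1n (y + w) <= l1n y + l1n w.
Proof.
move=> cy cw; have fD : finite_set ([set b | y b != 0] `|` [set b | w b != 0]) by rewrite finite_setU.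
rewrite /l1n (@sumT_fset R A (fun b => `|(y + w) b|) _ fD); last first.
  move=> a /not_orP [/negP /negPn /eqP ya /negP /negPn /eqP wa].
  have -> : (y + w) a = y a + w a by [].
  by rewrite ya wa addr0 normr0.
rewrite (@sumT_fset R A (fun b => `|y b|) _ fD); last first.
  by move=> a /not_orP [/negP /negPn /eqP ya _]; rewrite ya normr0.
rewrite (@sumT_fset R A (fun b => `|w b|) _ fD); last first.
  by move=> a /not_orP [_ /negP /negPn /eqP wa]; rewrite wa normr0.
rewrite -big_split /=; apply: ler_sum => b _; exact: ler_normD.
Qed.

Lemma l1n_scale (k : R) (y : A -> R) : l1n (k *: y) = `|k| * l1n y.
Proof.
rewrite /l1n mulr_fsumr; apply: eq_fsbigr => b _ /=.
by rewrite normrM.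
Qed.

Lemma l1n_sum (I : Type) (s : seq I) (t : I -> A -> R) : (forall i, c00 (t i)) ->
  c00 (\sum_(i <- s) t i) /\ l1n (\sum_(i <- s) t i) <= \sum_(i <- s) l1n (t i).
Proof.
move=> ct; elim: s => [|i s [IHc IHl]].
  rewrite !big_nil; split; first exact: c00_0.
  rewrite /l1n fsbig1 // => b _; by rewrite normr0.
rewrite !big_cons; split; first exact: c00_add.
apply: le_trans (@l1n_add (t i) _ (ct i) IHc) _; by rewrite lerD2l.
Qed.

End L1.
Arguments l1n {R A}. Arguments c00_0 {R A}. Arguments c00_scale {R A}. Arguments l1n_sum {R A}. Arguments l1n_scale {R A}. Arguments l1n_add {R A}. Arguments c00_add {R A}.

Lemma iii_ii (R : realType) (X : topologicalType) : prop_iii R X -> prop_ii R X.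
Proof.
move=> H3 A Phi sv hc00 cv tl.
have [f [fs frep]] := @from_iii R X H3 (A -> R) Phi sv cv tl.
exists f; split => // x e e0.
have [F [c [Hc Hsub Hn]]] := frep x.
pose t (z : X) (a : A -> R) := (c a z - c a x) *: a.
have ct : forall z a, c00 (t z a).
  move=> z a; have [k0|k0] := eqVneq (c a z - c a x) 0.
    rewrite /t k0 scale0r; exact: c00_0.
  apply: c00_scale.
  have [cz|cz] := eqVneq (c a z) 0.
    have cx : c a x != 0 by move: k0; rewrite cz sub0r oppr_eq0.
    exact: hc00 (Hsub a x cx).
  exact: hc00 (Hsub a z cz).
have fx := nbhs_singleton Hn.
have Hb : \forall z \near x,
    l1dist (f z) (f x) <= \sum_(a <- F) `|c a z - c a x| * l1n a.
  apply: (@filterS _ (nbhs x) _ _ _ _ Hn) => z fz.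
  have Heq : f z - f x = \sum_(a <- F) t z a.
    by rewrite fz fx /t -sumrB; apply: eq_bigr => a _; rewrite scalerBl.
  have -> : l1dist (f z) (f x) = l1n (f z - f x) by [].
  rewrite Heq.
  apply: le_trans (l1n_sum _ F (t z) (ct z)).2 _.
  by apply: ler_sum => a _; rewrite /t l1n_scale.
have Hl : (fun z => \sum_(a <- F) `|c a z - c a x| * l1n a) z @[z --> x] -->
    \sum_(a <- F) `|c a x - c a x| * l1n a.
  apply: cvg_sum_seq => a; apply: cvgM; last exact: cvg_cst.
  apply: cvg_norm; apply: cvgB; [exact: Hc | exact: cvg_cst].
have Hl0 : \sum_(a <- F) `|c a x - c a x| * l1n a < e.
  by rewrite big1 // => a _; rewrite subrr normr0 mul0r.
have := @cvgr_lt _ _ (nbhs x) (nbhs_filter x) _ _ Hl e Hl0.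
move=> H; apply: (@filterS _ (nbhs x) _ _ _ _ (filterI H Hb)) => z [H1 H2].
exact: le_lt_trans H2 H1.
Qed.


Theorem theorem4p2 (R : realType) (X : topologicalType) (hX : hausdorff_space X) :
  [<->
    (* (i) *)
    (forall (E : topologicalLmodType R) (Phi : X -> set E),
        setvalued Phi -> convex_valued Phi -> totally_lsc Phi ->
        exists f : X -> E, selection Phi f /\ continuous f);
    (* (ii) *)
    (forall (A : choiceType) (Phi : X -> set (A -> R)),
        setvalued Phi -> (forall x, Phi x `<=` @c00 R A) ->
        convex_valued Phi -> totally_lsc Phi ->
        exists f : X -> A -> R, selection Phi f /\ l1_continuous f);
    (* (iii) *)
    (forall (A : choiceType) (U : A -> set X), open_cover U ->
        exists xi : A -> X -> R, index_subordinated_pou U xi);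
    (* (iv) *)
    (forall (E : lmodType R) (Phi : X -> set E),
        setvalued Phi -> convex_valued Phi -> totally_lsc Phi ->
        exists f : X -> E, selection Phi f /\ finite_top_continuous f)].
Proof.
tfae.
- by move=> H1; apply: (@iii_ii R X); apply: (@i_iii R X).
- by move=> H2; apply: (@ii_iii R X).
- by move=> H3; apply: (@iii_iv R X).
- by move=> H4; apply: (@iv_i R X).
Qed.
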